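(* Let $\succcurlyeq$ be a preference relation on the set $\mathcal{B}$ of bets over a propositional language $\mathcal{L}$. The following are equivalent: (1) $\succcurlyeq$ satisfies Non-Triviality, Objective Expected Utility and Equivalence; (2) $\succcurlyeq$ is represented by a subjective model of uncertainty $(\Omega,t,\lambda)$ with $t$ exact and $\lambda$ additive; (3) $\succcurlyeq$ is represented by a subjective model of uncertainty $(\Omega',t',\lambda')$ with $t'$ sound.
   Context: Let $\mathbb{P}$ be a set of propositional variables containing two distinguished propositions $\mathbf{T}$ and $\mathbf{F}$, and $\mathcal{L}$ the language generated from $\mathbb{P}$ by $\neg,\land,\lor$. Write $\phi\implies\psi$ if $\psi$ can be deduced from $\phi$ in classical propositional logic (with $\mathbf{T}$ read as true and $\mathbf{F}$ as false), and $\phi\iff\psi$ if $\phi\implies\psi$ and $\psi\implies\phi$. A bet is a finitely supported $b:\mathcal{L}\to[0,1]$ with $\sum_\phi b(\phi)=1$; $b_\phi$ is the bet with $b_\phi(\phi)=1$. The set $\mathcal{B}$ of bets is a mixture space under pointwise mixtures; $\succcurlyeq$ is a relation on $\mathcal{B}$ with parts $\sim,\succ$. A truth valuation on a set $\Omega$ is $t:\mathcal{L}\to 2^\Omega$ with $t(\mathbf{T})=\Omega$, $t(\mathbf{F})=\emptyset$. It is exact if $\phi\iff\psi$ implies $t(\phi)=t(\psi)$; monotone if $\phi\implies\psi$ implies $t(\phi)\subseteq t(\psi)$; symmetric if $t(\neg\phi)=\Omega\setminus t(\phi)$; $\land$-distributive if $t(\phi\land\psi)=t(\phi)\cap t(\psi)$;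 sound if it is exact, monotone, symmetric and $\land$-distributive. A likelihood appraisal on a field $\Sigma\subseteq 2^\Omega$ is $\lambda:\Sigma\to[0,1]$ with $\lambda(\emptyset)=0,\lambda(\Omega)=1$ (no other condition); it is additive if finitely additive on disjoint sets. A subjective model of uncertainty $(\Omega,t,\lambda)$ has $t$ a truth valuation and $\lambda$ a likelihood appraisal on a field containing $t(\mathcal{L})$; it represents $\succcurlyeq$ if $b\succcurlyeq b'$ iff $\sum_\phi b(\phi)\lambda(t(\phi))\ge\sum_\phi b'(\phi)\lambda(t(\phi))$. Axioms: Non-Triviality: $b_{\mathbf{T}}\succcurlyeq b_\phi\succcurlyeq b_{\mathbf{F}}$ for all $\phi$ and $b_{\mathbf{T}}\succ b_{\mathbf{F}}$. Objective Expected Utility: $\succcurlyeq$ is complete, transitive, Archimedean and satisfies Independence. Equivalence: if $\psi\iff\phi$ then $b_\psi\sim b_\phi$. *)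

(* Defs.v *)
From Stdlib Require Import Reals List ClassicalEpsilon.
Import ListNotations.
Open Scope R_scope.
Set Implicit Arguments.

Inductive form (P : Type) : Type :=
| Var : P -> form P
| Neg : form P -> form P
| And : form P -> form P -> form P
| Or  : form P -> form P -> form P.
Arguments Var {P}. Arguments Neg {P}. Arguments And {P}. Arguments Or {P}.

Section Lang.
Variables (P : Type) (T F : P).

Fixpoint eval (v : P -> bool) (phi : form P) : bool :=
  match phi with
  | Var p => v p
  | Neg a => negb (eval v a)
  | And a b => andb (eval v a) (eval v b)
  | Or a b => orb (eval v a) (eval v b)
  end.

(** phi ==> psi : psi follows from phi in classical propositional logic,
    with T read as true and F read as false (semantic consequence). *)
Definition entails (phi psi : form P) : Prop :=
  forall v : P -> bool, v T = true -> v F = false ->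
    eval v phi = true -> eval v psi = true.

Definition equivf (phi psi : form P) : Prop := entails phi psi /\ entails psi phi.

Definition sumR (l : list (form P)) (f : form P -> R) : R :=
  fold_right (fun x acc => f x + acc) 0 l.

Definition supported_by (b : form P -> R) (s : list (form P)) : Prop :=
  NoDup s /\ forall phi, b phi <> 0 -> In phi s.

Definition is_bet (b : form P -> R) : Prop :=
  (forall phi, 0 <= b phi <= 1) /\
  exists s, supported_by b s /\ sumR s b = 1.

Definition pbet (phi : form P) : form P -> R :=
  fun psi => if excluded_middle_informative (psi = phi) then 1 else 0.

Definition mix (a : R) (b c : form P -> R) : form P -> R :=
  fun phi => a * b phi + (1 - a) * c phi.

Definition prefrel := (form P -> R) -> (form P -> R) -> Prop.

Definition strict (pref : prefrel) b b' := pref b b' /\ ~ pref b' b.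
Definition indiff (pref : prefrel) b b' := pref b b' /\ pref b' b.

Definition non_triviality (pref : prefrel) : Prop :=
  (forall phi, pref (pbet (Var T)) (pbet phi) /\ pref (pbet phi) (pbet (Var F))) /\
  strict pref (pbet (Var T)) (pbet (Var F)).

Definition complete (pref : prefrel) : Prop :=
  forall b b', is_bet b -> is_bet b' -> pref b b' \/ pref b' b.

Definition transitive (pref : prefrel) : Prop :=
  forall b b' b'', is_bet b -> is_bet b' -> is_bet b'' ->
    pref b b' -> pref b' b'' -> pref b b''.

Definition archimedean (pref : prefrel) : Prop :=
  forall b b' b'', is_bet b -> is_bet b' -> is_bet b'' ->
    strict pref b b' -> strict pref b' b'' ->
    exists a c, 0 < a < 1 /\ 0 < c < 1 /\
      strict pref (mix a b b'') b' /\ strict pref b' (mix c b b'').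

Definition independence (pref : prefrel) : Prop :=
  forall b b' b'' a, is_bet b -> is_bet b' -> is_bet b'' -> 0 < a < 1 ->
    strict pref b b' -> strict pref (mix a b b'') (mix a b' b'').

Definition objective_EU (pref : prefrel) : Prop :=
  complete pref /\ transitive pref /\ archimedean pref /\ independence pref.

Definition equivalence_ax (pref : prefrel) : Prop :=
  forall phi psi, equivf psi phi -> indiff pref (pbet psi) (pbet phi).

Section Model.
Variable Omega : Type.
Definition setT : Omega -> Prop := fun _ => True.
Definition set0 : Omega -> Prop := fun _ => False.

Definition truth_valuation (t : form P -> Omega -> Prop) : Prop :=
  t (Var T) = setT /\ t (Var F) = set0.

Definition exact (t : form P -> Omega -> Prop) : Prop :=
  forall phi psi, equivf phi psi -> t phi = t psi.
Definition monotone (t : form P -> Omega -> Prop) : Prop :=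
  forall phi psi, entails phi psi -> forall w, t phi w -> t psi w.
Definition symmetric (t : form P -> Omega -> Prop) : Prop :=
  forall phi, t (Neg phi) = (fun w => ~ t phi w).
Definition and_distributive (t : form P -> Omega -> Prop) : Prop :=
  forall phi psi, t (And phi psi) = (fun w => t phi w /\ t psi w).
Definition sound (t : form P -> Omega -> Prop) : Prop :=
  exact t /\ monotone t /\ symmetric t /\ and_distributive t.

Definition is_field (Sigma : (Omega -> Prop) -> Prop) : Prop :=
  Sigma setT /\
  (forall A, Sigma A -> Sigma (fun w => ~ A w)) /\
  (forall A B, Sigma A -> Sigma B -> Sigma (fun w => A w \/ B w)).

Definition likelihood_appraisal (Sigma : (Omega -> Prop) -> Prop)
  (lam : (Omega -> Prop) -> R) : Prop :=
  is_field Sigma /\ (forall A, Sigma A -> 0 <= lam A <= 1) /\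
  lam set0 = 0 /\ lam setT = 1.

Definition additive (Sigma : (Omega -> Prop) -> Prop)
  (lam : (Omega -> Prop) -> R) : Prop :=
  forall A B, Sigma A -> Sigma B -> (forall w, ~ (A w /\ B w)) ->
    lam (fun w => A w \/ B w) = lam A + lam B.

Definition subjective_model (t : form P -> Omega -> Prop)
  (Sigma : (Omega -> Prop) -> Prop) (lam : (Omega -> Prop) -> R) : Prop :=
  truth_valuation t /\ likelihood_appraisal Sigma lam /\ (forall phi, Sigma (t phi)).
End Model.

Definition expected (b u : form P -> R) (r : R) : Prop :=
  exists s, supported_by b s /\ r = sumR s (fun phi => b phi * u phi).

Definition represents (pref : prefrel) (u : form P -> R) : Prop :=
  forall b b', is_bet b -> is_bet b' ->
    (pref b b' <-> exists r r', expected b u r /\ expected b' u r' /\ r' <= r).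

End Lang.

(* Main.v *)
Require Import Defs.
From Stdlib Require Import Reals Lra List Permutation ClassicalEpsilon Classical FunctionalExtensionality PropExtensionality.
From Coquelicot Require Coquelicot.
Import ListNotations.
Open Scope R_scope.

Module BinS.
Import Coquelicot.Coquelicot.

Fixpoint rem (x:R) (n:nat) : R :=
  match n with
  | O => x
  | S k => if Rle_dec ((1/2)^(S k)) (rem x k) then rem x k - (1/2)^(S k) else rem x k
  end.

Definition digit (x : R) (n : nat) : bool :=
  if Rle_dec ((1/2)^(S n)) (rem x n) then true else false.

Definition term (x : R) (n : nat) : R := if digit x n then (1/2)^(S n) else 0.

Lemma rem_S x n : rem x (S n) = rem x n - term x n.
Proof. unfold term, digit. simpl rem. destruct Rle_dec; simpl; lra. Qed.

Lemma half_pow_pos n : 0 < (1/2)^n.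
Proof. apply pow_lt; lra. Qed.

Lemma rem_bound x n : 0 <= x <= 1 -> 0 <= rem x n <= (1/2)^n.
Proof.
  intros Hx; induction n as [|n IH]; simpl; [lra|].
  destruct Rle_dec as [H|H]; simpl in *; lra.
Qed.

Lemma sum_term x n : sum_n (term x) n = x - rem x (S n).
Proof.
  induction n as [|n IH].
  - rewrite sum_O. rewrite rem_S. simpl rem. lra.
  - rewrite sum_Sn, IH. rewrite (rem_S x (S n)). unfold plus; simpl. lra.
Qed.

Lemma term_series x : 0 <= x <= 1 -> is_series (term x) x.
Proof.
  intros Hx.
  assert (H : is_lim_seq (sum_n (term x)) x).
  { apply is_lim_seq_le_le with (u := fun n => x - (1/2)^(S n)) (w := fun n => x).
    - intros n. rewrite sum_term. pose proof (rem_bound x (S n) Hx). lra.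
    - replace (Finite x) with (Rbar_minus x 0) by (simpl; f_equal; ring).
      apply is_lim_seq_minus'. apply is_lim_seq_const.
      apply (is_lim_seq_incr_1 (fun n => (1/2)^n)). apply is_lim_seq_geom.
      rewrite Rabs_pos_eq; lra.
    - apply is_lim_seq_const. }
  exact H.
Qed.

Definition lam (A : nat -> Prop) : R :=
  Series (fun n => if excluded_middle_informative (A n) then (1/2)^(S n) else 0).

Lemma geom_half : is_series (fun n : nat => (1/2)^(S n)) 1.
Proof.
  pose proof (is_series_geom (1/2)) as H.
  rewrite Rabs_pos_eq in H by lra. specialize (H ltac:(lra)).
  apply (is_series_scal_l (1/2)) in H.
  match type of H with is_series _ ?l => replace l with 1 in H by (unfold scal; simpl; unfold mult; simpl; field) end. eapply is_series_ext; [|exact H]. intros n; simpl. unfold scal; simpl. unfold mult; simpl. reflexivity.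
Qed.

Lemma zero_series : is_series (fun _ : nat => 0) 0.
Proof.
  pose proof (is_series_scal_l 0 _ _ geom_half) as G.
  match type of G with is_series _ ?l => replace l with 0 in G by (unfold scal; simpl; unfold mult; simpl; ring) end.
  eapply is_series_ext; [|exact G]. intros; unfold scal; simpl; unfold mult; simpl; ring.
Qed.

Lemma ex_geom_half : ex_series (fun n : nat => (1/2)^(S n)).
Proof. exists 1. exact geom_half. Qed.

Lemma ex_ind A : ex_series (fun n => if excluded_middle_informative (A n) then (1/2)^(S n) else 0).
Proof.
  apply (@ex_series_le R_AbsRing R_CompleteNormedModule _ (fun n : nat => (1/2)^(S n))); [|apply ex_geom_half].
  intros n. destruct excluded_middle_informative; unfold norm; simpl.
  - unfold abs; simpl; rewrite Rabs_pos_eq; [lra| left; apply (half_pow_pos (S n))].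
  - unfold abs; simpl; rewrite Rabs_R0. left; apply (half_pow_pos (S n)).
Qed.

Lemma lam_range A : 0 <= lam A <= 1.
Proof.
  unfold lam; split.
  - pose proof (Series_le (fun _ => 0) (fun n => if excluded_middle_informative (A n) then (1/2)^(S n) else 0)) as H.
    assert (H0 : Series (fun _ : nat => 0) = 0).
    { apply is_series_unique. apply zero_series. }
    rewrite H0 in H. apply H; [|apply ex_ind].
    intros n; pose proof (half_pow_pos (S n)); destruct excluded_middle_informative; split; lra.
  - apply Rle_trans with (Series (fun n : nat => (1/2)^(S n))); [|rewrite (is_series_unique _ _ geom_half); lra].
    apply Series_le; [|apply ex_geom_half].
    intros n; pose proof (half_pow_pos (S n)); destruct excluded_middle_informative; split; lra.
Qed.

Lemma lam_set0 : lam (fun _ => False) = 0.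
Proof.
  unfold lam. apply is_series_unique.
  eapply is_series_ext; [|apply zero_series].
  intros; destruct excluded_middle_informative; [contradiction|reflexivity].
Qed.

Lemma lam_setT : lam (fun _ => True) = 1.
Proof.
  unfold lam. apply is_series_unique.
  eapply is_series_ext; [|exact geom_half].
  intros n; destruct excluded_middle_informative; [reflexivity|tauto].
Qed.

Lemma lam_add A B : (forall w, ~ (A w /\ B w)) ->
  lam (fun w => A w \/ B w) = lam A + lam B.
Proof.
  intros Hd. unfold lam. rewrite <- Series_plus by apply ex_ind.
  apply Series_ext. intros n.
  repeat destruct excluded_middle_informative; try tauto; try ring.
  exfalso; apply (Hd n); tauto.
Qed.

Lemma lam_digits x : 0 <= x <= 1 -> lam (fun n => digit x n = true) = x.
Proof.
  intros Hx. unfold lam. apply is_series_unique.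
  eapply is_series_ext; [|apply (term_series x Hx)].
  intros n. unfold term. destruct excluded_middle_informative as [H|H].
  - rewrite H; reflexivity.
  - destruct (digit x n); [tauto|reflexivity].
Qed.

Lemma rem_one n : rem 1 n = (1/2)^n.
Proof.
  induction n as [|n IH]; simpl; [reflexivity|].
  rewrite IH. destruct Rle_dec as [H|H]; [field|].
  exfalso; apply H. simpl. pose proof (half_pow_pos n). lra.
Qed.

Lemma digit_one n : digit 1 n = true.
Proof.
  unfold digit. rewrite rem_one. destruct Rle_dec as [H|H]; [reflexivity|].
  exfalso; apply H. simpl. pose proof (half_pow_pos n). lra.
Qed.

Lemma rem_zero n : rem 0 n = 0.
Proof.
  induction n as [|n IH]; simpl; [reflexivity|].
  rewrite IH. destruct Rle_dec as [H|H]; [|reflexivity].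
  exfalso. pose proof (half_pow_pos (S n)). simpl in *. lra.
Qed.

Lemma digit_zero n : digit 0 n = false.
Proof.
  unfold digit. rewrite rem_zero. destruct Rle_dec as [H|H]; [|reflexivity].
  exfalso. pose proof (half_pow_pos (S n)). simpl in *. lra.
Qed.

End BinS.

Section Gen.
Context {P : Type}.

Lemma sumR_nil (f : form P -> R) : sumR [] f = 0.
Proof. reflexivity. Qed.
Lemma sumR_cons x l (f : form P -> R) : sumR (x :: l) f = f x + sumR l f.
Proof. reflexivity. Qed.

Lemma sumR_ext_in (s : list (form P)) f g :
  (forall x, In x s -> f x = g x) -> sumR s f = sumR s g.
Proof.
  induction s as [|a s IH]; intros H; [reflexivity|].
  rewrite !sumR_cons. rewrite (H a (or_introl eq_refl)). rewrite IH; [reflexivity|].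
  intros; apply H; right; auto.
Qed.

Lemma sumR_lin (s : list (form P)) a c f g :
  sumR s (fun x => a * f x + c * g x) = a * sumR s f + c * sumR s g.
Proof. induction s as [|x s IH]; simpl; [ring|]. rewrite IH. ring. Qed.

Lemma sumR_scal (s : list (form P)) a f :
  sumR s (fun x => f x * a) = sumR s f * a.
Proof. induction s as [|x s IH]; simpl; [ring|]. rewrite IH. ring. Qed.

Lemma sumR_nonneg (s : list (form P)) f : (forall x, 0 <= f x) -> 0 <= sumR s f.
Proof. intros H; induction s as [|x s IH]; simpl; [lra|]. specialize (H x). lra. Qed.

Lemma sumR_le (s : list (form P)) f g : (forall x, f x <= g x) -> sumR s f <= sumR s g.
Proof. intros H; induction s as [|x s IH]; simpl; [lra|]. specialize (H x). lra. Qed.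

Lemma sumR_le_in (s : list (form P)) f x : (forall y, 0 <= f y) -> In x s -> f x <= sumR s f.
Proof.
  intros H; induction s as [|y s IH]; simpl; [tauto|]. intros [->|Hin].
  - pose proof (sumR_nonneg s f H). lra.
  - specialize (IH Hin). specialize (H y). lra.
Qed.

Lemma sumR_perm (l l' : list (form P)) f : Permutation l l' -> sumR l f = sumR l' f.
Proof.
  induction 1; simpl; try lra.
Qed.

Definition nzb (f : form P -> R) (x : form P) : bool :=
  if Req_EM_T (f x) 0 then false else true.

Lemma sumR_filter (s : list (form P)) f : sumR s f = sumR (filter (nzb f) s) f.
Proof.
  induction s as [|x s IH]; simpl; [reflexivity|]. unfold nzb at 1.
  destruct Req_EM_T as [E|E]; simpl; rewrite IH; [rewrite E|]; ring.
Qed.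

Lemma sumR_support (s1 s2 : list (form P)) f :
  NoDup s1 -> NoDup s2 -> (forall x, f x <> 0 -> In x s1) -> (forall x, f x <> 0 -> In x s2) ->
  sumR s1 f = sumR s2 f.
Proof.
  intros N1 N2 H1 H2. rewrite (sumR_filter s1), (sumR_filter s2).
  apply sumR_perm. apply NoDup_Permutation; try (apply NoDup_filter; assumption).
  intros x. rewrite !filter_In. unfold nzb. destruct Req_EM_T as [E|E]; [split; intros [_ Hf]; discriminate|].
  split; intros [_ ?]; split; auto.
Qed.

Definition deq (x y : form P) : {x = y} + {x <> y} := excluded_middle_informative (x = y).

Definition union (s1 s2 : list (form P)) := nodup deq (s1 ++ s2).

Lemma union_nodup s1 s2 : NoDup (union s1 s2).
Proof. apply NoDup_nodup. Qed.
Lemma union_in1 s1 s2 x : In x s1 -> In x (union s1 s2).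
Proof. intros; unfold union; apply nodup_In; apply in_or_app; auto. Qed.
Lemma union_in2 s1 s2 x : In x s2 -> In x (union s1 s2).
Proof. intros; unfold union; apply nodup_In; apply in_or_app; auto. Qed.

Lemma supp_sum (b : form P -> R) (s s' : list (form P)) (f : form P -> R) : supported_by b s -> NoDup s' -> (forall x, b x <> 0 -> In x s') ->
  sumR s (fun x => b x * f x) = sumR s' (fun x => b x * f x).
Proof.
  intros [N H] N' H'. apply sumR_support; auto; intros x Hx; [apply H|apply H'];
  intros E; apply Hx; rewrite E; ring.
Qed.

Lemma supp_sum1 (b : form P -> R) (s s' : list (form P)) : supported_by b s -> NoDup s' -> (forall x, b x <> 0 -> In x s') ->
  sumR s b = sumR s' b.
Proof. intros [N H] N' H'. apply sumR_support; auto. Qed.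

Lemma expected_unique (b u : form P -> R) r r' : expected b u r -> expected b u r' -> r = r'.
Proof.
  intros [s [Hs ->]] [s' [Hs' ->]]. apply supp_sum; auto; apply Hs'.
Qed.

Lemma bet_expected (b u : form P -> R) : is_bet b -> exists r, expected b u r.
Proof. intros [_ [s [Hs _]]]. exists (sumR s (fun x => b x * u x)); exists s; auto. Qed.

Lemma mix_support a (b c : form P -> R) s1 s2 : supported_by b s1 -> supported_by c s2 ->
  supported_by (mix a b c) (union s1 s2).
Proof.
  intros [_ H1] [_ H2]. split; [apply union_nodup|]. intros x Hx. unfold mix in Hx.
  destruct (Req_dec (b x) 0) as [E|E].
  - apply union_in2, H2. intros E'. apply Hx. rewrite E, E'. ring.
  - apply union_in1, H1, E.
Qed.

Lemma is_bet_mix a (b c : form P -> R) : 0 <= a <= 1 -> is_bet b -> is_bet c -> is_bet (mix a b c).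
Proof.
  intros Ha [Rb [s1 [S1 E1]]] [Rc [s2 [S2 E2]]]. split.
  - intros x; unfold mix; specialize (Rb x); specialize (Rc x); nra.
  - exists (union s1 s2). split; [apply mix_support; auto|].
    unfold mix. rewrite sumR_lin.
    assert (A1 : sumR s1 b = sumR (union s1 s2) b).
    { apply supp_sum1; auto; [apply union_nodup|]. intros; apply union_in1, (proj2 S1); auto. }
    assert (A2 : sumR s2 c = sumR (union s1 s2) c).
    { apply supp_sum1; auto; [apply union_nodup|]. intros; apply union_in2, (proj2 S2); auto. }
    rewrite <- A1, <- A2, E1, E2; ring.
Qed.

Lemma expected_mix a (b c u : form P -> R) r r' : expected b u r -> expected c u r' ->
  expected (mix a b c) u (a * r + (1 - a) * r').
Proof.
  intros [s1 [S1 ->]] [s2 [S2 ->]]. exists (union s1 s2). split; [apply mix_support; auto|].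
  rewrite (supp_sum b s1 (union s1 s2)); auto;
      [|apply union_nodup|intros; apply union_in1, (proj2 S1); auto].
  rewrite (supp_sum c s2 (union s1 s2)); auto;
      [|apply union_nodup|intros; apply union_in2, (proj2 S2); auto].
  rewrite <- sumR_lin. apply sumR_ext_in. intros; unfold mix; ring.
Qed.

Lemma pbet_self (phi : form P) : pbet phi phi = 1.
Proof. unfold pbet; destruct excluded_middle_informative; congruence. Qed.
Lemma pbet_other (phi psi : form P) : psi <> phi -> pbet phi psi = 0.
Proof. unfold pbet; destruct excluded_middle_informative; congruence. Qed.

Lemma pbet_support (phi : form P) : supported_by (pbet phi) [phi].
Proof.
  split; [constructor; [simpl; tauto|constructor]|].
  intros x Hx. destruct (deq x phi) as [->|E]; [left; auto|]. exfalso; apply Hx, pbet_other, E.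
Qed.

Lemma is_bet_pbet (phi : form P) : is_bet (pbet phi).
Proof.
  split.
  - intros x; unfold pbet; destruct excluded_middle_informative; lra.
  - exists [phi]; split; [apply pbet_support|]. simpl. rewrite pbet_self. ring.
Qed.

Lemma expected_pbet (phi : form P) u : expected (pbet phi) u (u phi).
Proof. exists [phi]; split; [apply pbet_support|]. simpl. rewrite pbet_self. ring. Qed.

Lemma expected_range (b u : form P -> R) r : is_bet b -> (forall x, 0 <= u x <= 1) -> expected b u r -> 0 <= r <= 1.
Proof.
  intros [Rb [s [S E]]] Hu He.
  assert (r = sumR s (fun x => b x * u x)) as ->.
  { apply (expected_unique b u); auto. exists s; auto. }
  split.
  - apply sumR_nonneg; intros x; specialize (Rb x); specialize (Hu x); nra.
  - rewrite <- E. apply sumR_le. intros x; specialize (Rb x); specialize (Hu x); nra.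
Qed.

End Gen.

Section A.
Context {P : Type} (T F : P).

Definition good (pref : prefrel P) (u : form P -> R) : Prop :=
  u (Var T) = 1 /\ u (Var F) = 0 /\ (forall phi, 0 <= u phi <= 1) /\
  (forall phi psi, equivf T F phi psi -> u phi = u psi) /\ represents pref u.

Lemma repr_iff (pref : prefrel P) u b b' r r' : represents pref u -> is_bet b -> is_bet b' ->
  expected b u r -> expected b' u r' -> (pref b b' <-> r' <= r).
Proof.
  intros Hr Hb Hb' E E'. rewrite (Hr b b' Hb Hb'). split.
  - intros [x [x' [Ex [Ex' Hx]]]].
    rewrite (expected_unique b u r x E Ex), (expected_unique b' u r' x' E' Ex'); auto.
  - intros H; exists r, r'; auto.
Qed.

Lemma good_axioms pref u : good pref u ->
  non_triviality T F pref /\ objective_EU pref /\ equivalence_ax T F pref.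
Proof.
  intros [HT [HF [Hu [Heq Hr]]]].
  assert (RI : forall b b' r r', is_bet b -> is_bet b' -> expected b u r -> expected b' u r' ->
     (pref b b' <-> r' <= r)) by (intros; eapply repr_iff; eauto).
  assert (SI : forall b b' r r', is_bet b -> is_bet b' -> expected b u r -> expected b' u r' ->
     (strict pref b b' <-> r' < r)).
  { intros b b' r r' Hb Hb' E E'. unfold strict. rewrite (RI b b' r r'), (RI b' b r' r); auto.
    lra. }
  split; [|split].
  - split.
    + intros phi. pose proof (Hu phi).
      rewrite (RI _ _ _ _ (is_bet_pbet _) (is_bet_pbet _) (expected_pbet _ u) (expected_pbet phi u)).
      rewrite (RI _ _ _ _ (is_bet_pbet _) (is_bet_pbet _) (expected_pbet phi u) (expected_pbet _ u)).
      lra.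
    + rewrite (SI _ _ _ _ (is_bet_pbet _) (is_bet_pbet _) (expected_pbet _ u) (expected_pbet _ u)).
      lra.
  - split; [|split; [|split]].
    + intros b b' Hb Hb'.
      destruct (bet_expected b u Hb) as [r E]; destruct (bet_expected b' u Hb') as [r' E'].
      rewrite (RI b b' r r'), (RI b' b r' r); auto. lra.
    + intros b b' b'' Hb Hb' Hb''.
      destruct (bet_expected b u Hb) as [r E]; destruct (bet_expected b' u Hb') as [r' E'].
      destruct (bet_expected b'' u Hb'') as [r'' E''].
      rewrite (RI b b' r r'), (RI b' b'' r' r''), (RI b b'' r r''); auto. lra.
    + intros b b' b'' Hb Hb' Hb''.
      destruct (bet_expected b u Hb) as [r E]; destruct (bet_expected b' u Hb') as [r' E'].
      destruct (bet_expected b'' u Hb'') as [r'' E''].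
      rewrite (SI b b' r r'), (SI b' b'' r' r''); auto. intros H1 H2.
      set (th := (r' - r'') / (r - r'')).
      assert (Hth : th * (r - r'') = r' - r'') by (unfold th; field; lra).
      assert (Hth1 : 0 < th < 1).
      { unfold th; split.
        - apply Rdiv_lt_0_compat; lra.
        - apply (Rmult_lt_reg_r (r - r'')); [lra|]. unfold Rdiv. rewrite Rmult_assoc, Rinv_l; lra. }
      exists ((th + 1) / 2), (th / 2). split; [lra|]. split; [lra|].
      split.
      * rewrite (SI _ _ _ r' (is_bet_mix ((th+1)/2) b b'' ltac:(lra) Hb Hb'') Hb' (expected_mix _ _ _ _ _ _ E E'') E').
        nra.
      * rewrite (SI _ _ r' _ Hb' (is_bet_mix (th/2) b b'' ltac:(lra) Hb Hb'') E' (expected_mix _ _ _ _ _ _ E E'')).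
        nra.
    + intros b b' b'' a Hb Hb' Hb'' Ha.
      destruct (bet_expected b u Hb) as [r E]; destruct (bet_expected b' u Hb') as [r' E'].
      destruct (bet_expected b'' u Hb'') as [r'' E''].
      rewrite (SI b b' r r'); auto.
      rewrite (SI _ _ _ _ (is_bet_mix a b b'' ltac:(lra) Hb Hb'') (is_bet_mix a b' b'' ltac:(lra) Hb' Hb'')
                (expected_mix a _ _ _ _ _ E E'') (expected_mix a _ _ _ _ _ E' E'')).
      intros; nra.
  - intros phi psi He. pose proof (Heq psi phi He) as Hp. unfold indiff.
    rewrite (RI _ _ _ _ (is_bet_pbet psi) (is_bet_pbet phi) (expected_pbet _ u) (expected_pbet _ u)).
    rewrite (RI _ _ _ _ (is_bet_pbet phi) (is_bet_pbet psi) (expected_pbet _ u) (expected_pbet _ u)).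
    lra.
Qed.

End A.

Ltac mixeq := apply functional_extensionality; intros ?; unfold mix; field.

Section B.
Context {P : Type} (pref : prefrel P).
Hypothesis Hc : complete pref.
Hypothesis Ht : transitive pref.
Hypothesis Ha : archimedean pref.
Hypothesis Hi : independence pref.

Lemma ptr x y z : is_bet x -> is_bet y -> is_bet z -> pref x y -> pref y z -> pref x z.
Proof. exact (Ht x y z). Qed.

Lemma prefl x : is_bet x -> pref x x.
Proof. intros Hx; destruct (Hc x x Hx Hx); auto. Qed.

Lemma sp_tr x y z : is_bet x -> is_bet y -> is_bet z -> strict pref x y -> pref y z -> strict pref x z.
Proof.
  intros Hx Hy Hz [H1 H2] H3. split; [exact (ptr x y z Hx Hy Hz H1 H3)|]. intros H4. apply H2. exact (ptr y z x Hy Hz Hx H3 H4).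
Qed.

Lemma ps_tr x y z : is_bet x -> is_bet y -> is_bet z -> pref x y -> strict pref y z -> strict pref x z.
Proof.
  intros Hx Hy Hz H1 [H2 H3]. split; [exact (ptr x y z Hx Hy Hz H1 H2)|]. intros H4. apply H3. exact (ptr z x y Hz Hx Hy H4 H1).
Qed.

Lemma nstrict x y : strict pref x y -> strict pref y x -> False.
Proof. intros [_ H] [H' _]. auto. Qed.

Lemma indiff_of x y : is_bet x -> is_bet y -> ~ strict pref x y -> ~ strict pref y x -> indiff pref x y.
Proof.
  intros Hx Hy H1 H2. unfold strict in *. destruct (Hc x y Hx Hy); split; auto;
  apply NNPP; intros H3; [apply H1|apply H2]; auto.
Qed.

Lemma ind_tr x y z : is_bet x -> is_bet y -> is_bet z -> indiff pref x y -> indiff pref y z -> indiff pref x z.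
Proof. intros Hx Hy Hz [A1 A2] [B1 B2]; split; [exact (ptr x y z Hx Hy Hz A1 B1)|exact (ptr z y x Hz Hy Hx B2 A2)]. Qed.

Lemma ind_sym x y : indiff pref x y -> indiff pref y x.
Proof. intros []; split; auto. Qed.

Lemma mix_same a (x : form P -> R) : mix a x x = x.
Proof. mixeq. Qed.

Lemma d0 x z mu : is_bet x -> is_bet z -> indiff pref x z -> 0 < mu < 1 -> indiff pref (mix mu x z) x.
Proof.
  intros Hx Hz [Hxz Hzx] Hmu.
  assert (Hw : is_bet (mix mu x z)) by (apply is_bet_mix; auto; lra).
  assert (Hw2 : is_bet (mix mu (mix mu x z) z)) by (apply is_bet_mix; auto; lra).
  apply indiff_of; auto.
  - intros Hs.
    pose proof (Hi _ _ z mu Hw Hx Hz Hmu Hs) as h1.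
    assert (Hwz : strict pref (mix mu x z) z) by exact (sp_tr _ _ _ Hw Hx Hz Hs Hxz).
    pose proof (Hi _ _ (mix mu x z) (1 - mu) Hw Hz Hw ltac:(lra) Hwz) as h2.
    rewrite mix_same in h2.
    replace (mix (1 - mu) z (mix mu x z)) with (mix mu (mix mu x z) z) in h2 by mixeq.
    exact (nstrict _ _ h1 h2).
  - intros Hs.
    pose proof (Hi _ _ z mu Hx Hw Hz Hmu Hs) as h1.
    assert (Hzw : strict pref z (mix mu x z)) by exact (ps_tr _ _ _ Hz Hx Hw Hzx Hs).
    pose proof (Hi _ _ (mix mu x z) (1 - mu) Hz Hw Hw ltac:(lra) Hzw) as h2.
    rewrite mix_same in h2.
    replace (mix (1 - mu) z (mix mu x z)) with (mix mu (mix mu x z) z) in h2 by mixeq.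
    exact (nstrict _ _ h1 h2).
Qed.

Lemma S1 x y z mu : is_bet x -> is_bet y -> is_bet z -> indiff pref x y -> strict pref z x -> 0 < mu < 1 ->
  ~ strict pref (mix mu x z) (mix mu y z).
Proof.
  intros Hx Hy Hz [Hxy Hyx] Hzx Hmu Hs.
  assert (Hfx : is_bet (mix mu x z)) by (apply is_bet_mix; auto; lra).
  assert (Hfy : is_bet (mix mu y z)) by (apply is_bet_mix; auto; lra).
  assert (zfx : strict pref z (mix mu x z)).
  { pose proof (Hi z x z mu Hz Hx Hz Hmu Hzx) as h. rewrite mix_same in h. exact h. }
  destruct (Ha _ _ _ Hz Hfx Hfy zfx Hs) as [a [c [Ha1 [Hc1 [_ Hk]]]]].
  replace (mix c z (mix mu y z)) with (mix ((1 - c) * mu) y z) in Hk by mixeq.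
  assert (zy : strict pref z y) by exact (sp_tr _ _ _ Hz Hx Hy Hzx Hxy).
  assert (Hczy : is_bet (mix c z y)) by (apply is_bet_mix; auto; lra).
  assert (k1 : strict pref (mix c z y) y).
  { pose proof (Hi z y y c Hz Hy Hy Hc1 zy) as h. rewrite mix_same in h. exact h. }
  assert (k2 : strict pref (mix c z y) x) by exact (sp_tr _ _ _ Hczy Hy Hx k1 Hyx).
  pose proof (Hi _ _ z mu Hczy Hx Hz Hmu k2) as k3.
  replace (mix mu (mix c z y) z) with (mix ((1 - c) * mu) y z) in k3 by mixeq.
  exact (nstrict _ _ Hk k3).
Qed.

Lemma S2 x y z mu : is_bet x -> is_bet y -> is_bet z -> indiff pref x y -> strict pref x z -> 0 < mu < 1 ->
  ~ strict pref (mix mu x z) (mix mu y z).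
Proof.
  intros Hx Hy Hz [Hxy Hyx] Hxz Hmu Hs.
  assert (Hfx : is_bet (mix mu x z)) by (apply is_bet_mix; auto; lra).
  assert (Hfy : is_bet (mix mu y z)) by (apply is_bet_mix; auto; lra).
  assert (yz : strict pref y z) by exact (ps_tr _ _ _ Hy Hx Hz Hyx Hxz).
  assert (fyz : strict pref (mix mu y z) z).
  { pose proof (Hi y z z mu Hy Hz Hz Hmu yz) as h. rewrite mix_same in h. exact h. }
  destruct (Ha _ _ _ Hfx Hfy Hz Hs fyz) as [a [c [Ha1 [Hc1 [Hk _]]]]].
  replace (mix a (mix mu x z) z) with (mix (a * mu) x z) in Hk by mixeq.
  assert (Haxz : is_bet (mix a x z)) by (apply is_bet_mix; auto; lra).
  assert (k1 : strict pref x (mix a x z)).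
  { pose proof (Hi x z x (1 - a) Hx Hz Hx ltac:(lra) Hxz) as h. rewrite mix_same in h.
    replace (mix (1 - a) z x) with (mix a x z) in h by mixeq. exact h. }
  assert (k2 : strict pref y (mix a x z)) by exact (ps_tr _ _ _ Hy Hx Haxz Hyx k1).
  pose proof (Hi _ _ z mu Hy Haxz Hz Hmu k2) as k3.
  replace (mix mu (mix a x z) z) with (mix (a * mu) x z) in k3 by mixeq.
  exact (nstrict _ _ Hk k3).
Qed.

Lemma L4 x y z mu : is_bet x -> is_bet y -> is_bet z -> indiff pref x y -> 0 <= mu <= 1 ->
  indiff pref (mix mu x z) (mix mu y z).
Proof.
  intros Hx Hy Hz Hxy Hmu.
  destruct (Req_dec mu 0) as [->|H0].
  { replace (mix 0 x z) with z by mixeq. replace (mix 0 y z) with z by mixeq. split; apply prefl; auto. }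
  destruct (Req_dec mu 1) as [->|H1].
  { replace (mix 1 x z) with x by mixeq. replace (mix 1 y z) with y by mixeq. auto. }
  assert (Hm : 0 < mu < 1) by lra.
  assert (Hfx : is_bet (mix mu x z)) by (apply is_bet_mix; auto; lra).
  assert (Hfy : is_bet (mix mu y z)) by (apply is_bet_mix; auto; lra).
  destruct (classic (pref z x)) as [Hzx|Hzx]; destruct (classic (pref x z)) as [Hxz|Hxz].
  - assert (Ixz : indiff pref x z) by (split; auto).
    assert (Iyz : indiff pref y z) by exact (ind_tr _ _ _ Hy Hx Hz (ind_sym _ _ Hxy) Ixz).
    pose proof (d0 x z mu Hx Hz Ixz Hm) as D1. pose proof (d0 y z mu Hy Hz Iyz Hm) as D2.
    exact (ind_tr _ _ _ Hfx Hy Hfy (ind_tr _ _ _ Hfx Hx Hy D1 Hxy) (ind_sym _ _ D2)).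
  - assert (szx : strict pref z x) by (split; auto).
    assert (szy : strict pref z y) by exact (sp_tr _ _ _ Hz Hx Hy szx (proj1 Hxy)).
    apply indiff_of; auto.
    + apply S1; auto.
    + apply S1; auto; apply ind_sym; auto.
  - assert (sxz : strict pref x z) by (split; auto).
    assert (syz : strict pref y z) by exact (ps_tr _ _ _ Hy Hx Hz (proj2 Hxy) sxz).
    apply indiff_of; auto.
    + apply S2; auto.
    + apply S2; auto; apply ind_sym; auto.
  - exfalso. destruct (Hc x z Hx Hz); tauto.
Qed.

End B.



Section C.
Context {P : Type} (T F : P) (pref : prefrel P).
Hypothesis Hc : complete pref.
Hypothesis Ht : transitive pref.
Hypothesis Ha : archimedean pref.
Hypothesis Hi : independence pref.
Hypothesis Hnt : non_triviality T F pref.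

Let H := pbet (Var T).
Let L := pbet (Var F).
Definition M a := mix a H L.

Lemma bH : is_bet H. Proof. apply is_bet_pbet. Qed.
Lemma bL : is_bet L. Proof. apply is_bet_pbet. Qed.
Lemma bM a : 0 <= a <= 1 -> is_bet (M a).
Proof. intros; apply is_bet_mix; auto using bH, bL. Qed.

Lemma M1 : M 1 = H. Proof. unfold M; mixeq. Qed.
Lemma M0 : M 0 = L. Proof. unfold M; mixeq. Qed.

Lemma HL : strict pref H L. Proof. exact (proj2 Hnt). Qed.

Lemma Mbase a : 0 < a <= 1 -> strict pref (M a) L.
Proof.
  intros Ha1. destruct (Req_dec a 1) as [->|Ne]; [rewrite M1; apply HL|].
  pose proof (Hi H L L a bH bL bL ltac:(lra) HL) as h. rewrite mix_same in h. exact h.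
Qed.

Lemma L1 a c : 0 <= c < a -> a <= 1 -> strict pref (M a) (M c).
Proof.
  intros Hca Ha1. destruct (Req_dec c 0) as [->|Nc]; [rewrite M0; apply Mbase; lra|].
  pose proof (Hi (M a) L (M a) (1 - c / a) (bM a ltac:(lra)) bL (bM a ltac:(lra))) as h.
  assert (Hw : 0 < 1 - c / a < 1).
  { split.
    - assert (c / a < 1); [|lra]. apply (Rmult_lt_reg_r a); [lra|]. unfold Rdiv; rewrite Rmult_assoc, Rinv_l; lra.
    - assert (0 < c / a); [apply Rdiv_lt_0_compat; lra|lra]. }
  specialize (h Hw (Mbase a ltac:(lra))). rewrite mix_same in h.
  replace (mix (1 - c / a) L (M a)) with (M c) in h; [exact h|].
  unfold M. apply functional_extensionality; intros ?; unfold mix; field. lra.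
Qed.

Lemma M_inj a c : 0 <= a <= 1 -> 0 <= c <= 1 -> indiff pref (M a) (M c) -> a = c.
Proof.
  intros Ha1 Hc1 [I1 I2]. destruct (Rtotal_order a c) as [Hlt|[Heq|Hgt]]; auto.
  - exfalso. apply (proj2 (L1 c a ltac:(lra) ltac:(lra))). auto.
  - exfalso. apply (proj2 (L1 a c ltac:(lra) ltac:(lra))). auto.
Qed.

Lemma M_le a c : 0 <= c <= a -> a <= 1 -> pref (M a) (M c).
Proof.
  intros. destruct (Req_dec a c) as [->|Ne]; [apply prefl; auto; apply bM; lra|].
  apply (L1 a c); lra.
Qed.

Lemma L2 b : is_bet b -> pref H b -> pref b L -> exists a, 0 <= a <= 1 /\ indiff pref b (M a).
Proof.
  intros Hb HHb HbL.
  destruct (classic (pref b H)) as [HbH|HbH].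
  { exists 1; split; [lra|]. rewrite M1. split; auto. }
  destruct (classic (pref L b)) as [HLb|HLb].
  { exists 0; split; [lra|]. rewrite M0. split; auto. }
  assert (sHb : strict pref H b) by (split; auto).
  assert (sbL : strict pref b L) by (split; auto).
  set (E := fun a => 0 <= a <= 1 /\ strict pref b (M a)).
  assert (Hbd : bound E) by (exists 1; intros x [Hx _]; lra).
  assert (Hne : exists x, E x) by (exists 0; split; [lra|rewrite M0; auto]).
  destruct (completeness E Hbd Hne) as [m [Hub Hlub]].
  assert (Hm0 : 0 <= m) by (apply Hub; split; [lra|rewrite M0; auto]).
  assert (Hm1 : m <= 1) by (apply Hlub; intros x [Hx _]; lra).
  exists m; split; [lra|].
  apply indiff_of; auto using bM.
  -
    intros Hs.
    assert (Hm1' : m < 1).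
    { destruct (Req_dec m 1) as [E1|E1]; [|lra]. rewrite E1, M1 in Hs. exfalso; exact (nstrict pref _ _ Hs sHb). }
    destruct (Ha H b (M m) bH Hb (bM m ltac:(lra)) sHb Hs) as [a [c [Ha1 [Hc1 [_ Hk]]]]].
    replace (mix c H (M m)) with (M (c + (1 - c) * m)) in Hk by (unfold M; mixeq).
    assert (E (c + (1 - c) * m)) by (split; [nra|exact Hk]).
    assert (c + (1 - c) * m <= m) by (apply Hub; auto). nra.
  - intros Hs.
    assert (Hm0' : 0 < m).
    { destruct (Req_dec m 0) as [E0|E0]; [|lra]. rewrite E0, M0 in Hs. exfalso; exact (nstrict pref _ _ Hs sbL). }
    assert (sbM0 : strict pref b (M 0)) by (rewrite M0; auto).
    destruct (Ha (M m) b (M 0) (bM m ltac:(lra)) Hb (bM 0 ltac:(lra)) Hs sbM0) as [a [c [Ha1 [Hc1 [Hk _]]]]].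
    replace (mix a (M m) (M 0)) with (M (a * m)) in Hk by (unfold M; mixeq).
    assert (Hex : exists e, E e /\ a * m < e).
    { apply NNPP; intros Hn. assert (m <= a * m); [|nra].
      apply Hlub. intros x Hx. apply Rnot_lt_le. intros Hlt. apply Hn. exists x; auto. }
    destruct Hex as [e [[He1 He2] He3]].
    pose proof (L1 e (a * m) ltac:(nra) ltac:(lra)) as h.
    pose proof (sp_tr pref Ht _ _ _ (bM e ltac:(lra)) (bM (a*m) ltac:(nra)) Hb h (proj1 Hk)) as h2.
    exact (nstrict pref _ _ h2 He2).
Qed.


Lemma sumR_zero_in (s : list (form P)) f : (forall x, In x s -> f x = 0) -> sumR s f = 0.
Proof.
  induction s as [|x s IH]; intros Hz; [reflexivity|]. rewrite sumR_cons, Hz, IH; [ring| |left; auto].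
  intros; apply Hz; right; auto.
Qed.

Lemma bet_of (b : form P -> R) s : (forall phi, 0 <= b phi) -> NoDup s -> (forall phi, b phi <> 0 -> In phi s) ->
  sumR s b = 1 -> is_bet b.
Proof.
  intros Hnn Hnd Hsup Hsum. split.
  - intros phi. split; auto. destruct (Req_dec (b phi) 0) as [E|E]; [lra|].
    rewrite <- Hsum. apply sumR_le_in; auto.
  - exists s; split; [split|]; auto.
Qed.

Definition ugood (u : form P -> R) := forall phi, 0 <= u phi <= 1.

Lemma ev_range (b u : form P -> R) s : ugood u -> (forall phi, 0 <= b phi) -> sumR s b = 1 ->
  0 <= sumR s (fun phi => b phi * u phi) <= 1.
Proof.
  intros Hu Hnn Hs. split.
  - apply sumR_nonneg; intros x; specialize (Hu x); specialize (Hnn x); nra.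
  - rewrite <- Hs. apply sumR_le; intros x; specialize (Hu x); specialize (Hnn x); nra.
Qed.

Lemma pt_ex phi : exists a, 0 <= a <= 1 /\ indiff pref (pbet phi) (M a).
Proof. apply L2; [apply is_bet_pbet|apply (proj1 Hnt phi)|apply (proj1 Hnt phi)]. Qed.

Definition uu phi := proj1_sig (constructive_indefinite_description _ (pt_ex phi)).

Lemma uu_spec phi : 0 <= uu phi <= 1 /\ indiff pref (pbet phi) (M (uu phi)).
Proof. unfold uu; destruct constructive_indefinite_description; simpl; auto. Qed.

Lemma uu_good : ugood uu.
Proof. intros phi; apply uu_spec. Qed.

Lemma main_ind s : forall b, (forall phi, 0 <= b phi) -> NoDup s -> (forall phi, b phi <> 0 -> In phi s) ->
  sumR s b = 1 -> indiff pref b (M (sumR s (fun phi => b phi * uu phi))).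
Proof.
  induction s as [|phi0 s IH]; intros b Hnn Hnd Hsup Hsum.
  { simpl in Hsum; lra. }
  rewrite sumR_cons in Hsum |- *. apply NoDup_cons_iff in Hnd as [Hnin Hnd'].
  pose proof (sumR_nonneg s b Hnn) as HS.
  destruct (Req_dec (b phi0) 1) as [E1|E1].
  - assert (Z : forall psi, In psi s -> b psi = 0).
    { intros psi Hin. pose proof (sumR_le_in s b psi Hnn Hin). specialize (Hnn psi). lra. }
    assert (Hb : b = pbet phi0).
    { apply functional_extensionality; intros psi. unfold pbet.
      destruct excluded_middle_informative as [->|Ne]; auto.
      destruct (Req_dec (b psi) 0) as [E|E]; auto.
      destruct (Hsup psi E) as [Eq|Hin]; [congruence|]. apply Z; auto. }
    rewrite (sumR_zero_in s (fun phi => b phi * uu phi)); [|intros x Hx; rewrite Z; auto; ring].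
    rewrite E1. replace (1 * uu phi0 + 0) with (uu phi0) by ring. rewrite Hb. apply uu_spec.
  - assert (Hp : b phi0 < 1) by (specialize (Hnn phi0); lra).
    assert (Hp0 : 0 <= b phi0) by apply Hnn.
    set (p := b phi0) in *.
    set (b' := fun psi => if excluded_middle_informative (psi = phi0) then 0 else b psi / (1 - p)).
    assert (Eb' : forall psi, In psi s -> b' psi = b psi * / (1 - p)).
    { intros psi Hin. unfold b'. destruct excluded_middle_informative as [->|]; [contradiction|reflexivity]. }
    assert (Hnn' : forall psi, 0 <= b' psi).
    { intros psi; unfold b'; destruct excluded_middle_informative; [lra|].
      unfold Rdiv; apply Rmult_le_pos; [auto|left; apply Rinv_0_lt_compat; lra]. }
    assert (Hsup' : forall psi, b' psi <> 0 -> In psi s).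
    { intros psi Hne. unfold b' in Hne. destruct excluded_middle_informative as [|Ne]; [lra|].
      destruct (Req_dec (b psi) 0) as [E|E]; [rewrite E in Hne; unfold Rdiv in Hne; lra|].
      destruct (Hsup psi E) as [Eq|Hin]; [congruence|auto]. }
    assert (Hsum' : sumR s b' = 1).
    { rewrite (sumR_ext_in s b' (fun x => b x * / (1 - p))) by auto.
      rewrite sumR_scal. field_simplify_eq; lra. }
    pose proof (IH b' Hnn' Hnd' Hsup' Hsum') as I'.
    set (E' := sumR s (fun phi => b' phi * uu phi)) in *.
    assert (HE' : E' = sumR s (fun phi => b phi * uu phi) * / (1 - p)).
    { unfold E'. rewrite <- sumR_scal. apply sumR_ext_in. intros x Hx. rewrite Eb'; auto. ring. }
    assert (HE'r : 0 <= E' <= 1) by (apply ev_range; auto using uu_good).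
    assert (Hbb : b = mix p (pbet phi0) b').
    { apply functional_extensionality; intros psi. unfold mix, pbet, b'.
      destruct excluded_middle_informative as [->|Ne]; [fold p; ring|]. field. lra. }
    assert (Bb' : is_bet b') by (eapply bet_of; eauto).
    destruct (uu_spec phi0) as [Hu0 Iu0].
    assert (B0 : is_bet (M (uu phi0))) by (apply bM; auto).
    assert (BE : is_bet (M E')) by (apply bM; auto).
    pose proof (L4 pref Hc Ht Ha Hi (pbet phi0) (M (uu phi0)) b' p (is_bet_pbet _) B0 Bb' Iu0 ltac:(lra)) as J1.
    pose proof (L4 pref Hc Ht Ha Hi b' (M E') (M (uu phi0)) (1 - p) Bb' BE B0 I' ltac:(lra)) as J2.
    replace (mix (1 - p) b' (M (uu phi0))) with (mix p (M (uu phi0)) b') in J2 by mixeq.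
    replace (mix (1 - p) (M E') (M (uu phi0))) with (M (p * uu phi0 + sumR s (fun phi => b phi * uu phi))) in J2.
    2:{ unfold M. apply functional_extensionality; intros ?; unfold mix. rewrite HE'. field. lra. }
    rewrite Hbb at 1.
    eapply (ind_tr pref Ht); [| |apply bM| exact J1 | exact J2].
    + apply is_bet_mix; [lra|apply is_bet_pbet|auto].
    + apply is_bet_mix; [lra|auto|auto].
    + assert (X : sumR s (fun phi => b phi * uu phi) = E' * (1 - p)) by (rewrite HE'; field; lra).
      rewrite X. nra.
Qed.

Hypothesis Heqa : equivalence_ax T F pref.

Lemma bet_rep b : is_bet b -> exists r, expected b uu r /\ 0 <= r <= 1 /\ indiff pref b (M r).
Proof.
  intros Hb. destruct Hb as [Rb [s [[Hnd Hsup] Hsum]]].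
  exists (sumR s (fun phi => b phi * uu phi)). split; [exists s; split; [split|]; auto|].
  split; [apply ev_range; auto using uu_good; intros; apply Rb|].
  apply main_ind; auto. intros; apply Rb.
Qed.

Lemma uu_is_good : good T F pref uu.
Proof.
  assert (Inj : forall phi psi, indiff pref (pbet phi) (pbet psi) -> uu phi = uu psi).
  { intros phi psi I. destruct (uu_spec phi) as [R1 I1]. destruct (uu_spec psi) as [R2 I2].
    apply M_inj; auto.
    eapply (ind_tr pref Ht); [apply bM; auto|apply is_bet_pbet|apply bM; auto| |].
    - eapply (ind_tr pref Ht); [apply bM; auto|apply is_bet_pbet|apply is_bet_pbet| |exact I].
      apply ind_sym; exact I1.
    - exact I2. }
  split; [|split; [|split; [|split]]].
  - destruct (uu_spec (Var T)) as [R1 I1]. symmetry. apply M_inj; auto; [lra|].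
    rewrite M1. exact I1.
  - destruct (uu_spec (Var F)) as [R1 I1]. symmetry. apply M_inj; auto; [lra|].
    rewrite M0. exact I1.
  - apply uu_good.
  - intros phi psi He. apply Inj. apply (Heqa psi phi He).
  - intros b b' Hb Hb'.
    destruct (bet_rep b Hb) as [r [Er [Rr Ir]]]. destruct (bet_rep b' Hb') as [r' [Er' [Rr' Ir']]].
    split.
    + intros Hp. exists r, r'. split; [|split]; auto.
      apply Rnot_lt_le. intros Hlt.
      pose proof (L1 r' r ltac:(lra) ltac:(lra)) as S.
      pose proof (sp_tr pref Ht _ _ _ (bM r' Rr') (bM r Rr) Hb S (proj2 Ir)) as S2.
      pose proof (ps_tr pref Ht _ _ _ Hb' (bM r' Rr') Hb (proj1 Ir') S2) as S3.
      apply (proj2 S3). exact Hp.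
    + intros [r0 [r0' [E0 [E0' Hle]]]].
      rewrite <- (expected_unique b uu r r0 Er E0) in Hle.
      rewrite <- (expected_unique b' uu r' r0' Er' E0') in Hle.
      apply (ptr pref Ht b (M r) b'); auto; [apply bM; auto|apply (proj1 Ir)|].
      apply (ptr pref Ht (M r) (M r') b'); auto; try apply bM; auto; [apply M_le; lra|apply (proj2 Ir')].
Qed.

End C.

Lemma axioms_good {P : Type} (T F : P) (pref : prefrel P) :
  non_triviality T F pref /\ objective_EU pref /\ equivalence_ax T F pref -> exists u, good T F pref u.
Proof.
  intros [Hnt [[Hc [Ht [Ha Hi]]] Heq]]. exists (uu T F pref Hc Ht Ha Hi Hnt).
  apply uu_is_good; auto.
Qed.

Section E.
Context {P : Type} (T F : P) (pref : prefrel P).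

Lemma good_model2 u : good T F pref u ->
   (exists (Omega : Type) (t : form P -> Omega -> Prop)
      (Sigma : (Omega -> Prop) -> Prop) (lam : (Omega -> Prop) -> R),
      subjective_model T F t Sigma lam /\ exact T F t /\ additive Sigma lam /\
      represents pref (fun phi => lam (t phi))).
Proof.
  intros [HT [HF [Hu [Heq Hr]]]].
  exists nat, (fun phi n => BinS.digit (u phi) n = true), (fun _ => True), BinS.lam.
  split; [|split; [|split]].
  - split; [|split].
    + split.
      * apply functional_extensionality; intros n. apply propositional_extensionality.
        rewrite HT, BinS.digit_one. unfold setT. tauto.
      * apply functional_extensionality; intros n. apply propositional_extensionality.
        rewrite HF, BinS.digit_zero. unfold set0. split; [discriminate|tauto].
    + split; [split; [auto|split; auto]|]. split; [intros; apply BinS.lam_range|].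
      split; [apply BinS.lam_set0|apply BinS.lam_setT].
    + intros; auto.
  - intros phi psi He. rewrite (Heq phi psi He). reflexivity.
  - intros A B _ _ Hd. apply BinS.lam_add; auto.
  - replace (fun phi => BinS.lam (fun n => BinS.digit (u phi) n = true)) with u; auto.
    apply functional_extensionality; intros phi. symmetry. apply BinS.lam_digits. auto.
Qed.

Definition Val := {v : P -> bool | v T = true /\ v F = false}.
Definition tS (phi : form P) : Val -> Prop := fun w => eval (proj1_sig w) phi = true.

Lemma tS_inj phi psi : tS phi = tS psi -> equivf T F phi psi.
Proof.
  intros E. split; intros v HvT HvF Hv.
  - assert (X : tS phi (exist _ v (conj HvT HvF))) by exact Hv.
    rewrite E in X. exact X.
  - assert (X : tS psi (exist _ v (conj HvT HvF))) by exact Hv.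
    rewrite <- E in X. exact X.
Qed.

Definition lamS (u : form P -> R) (A : Val -> Prop) : R :=
  match excluded_middle_informative (exists phi, A = tS phi) with
  | left H => u (proj1_sig (constructive_indefinite_description _ H))
  | right _ => 0
  end.

Lemma lamS_tS u phi : (forall phi psi, equivf T F phi psi -> u phi = u psi) -> lamS u (tS phi) = u phi.
Proof.
  intros Heq. unfold lamS. destruct excluded_middle_informative as [H|H].
  - destruct constructive_indefinite_description as [psi Hpsi]; simpl.
    apply Heq. apply tS_inj. auto.
  - exfalso; apply H; exists phi; auto.
Qed.

Lemma good_model3 u : good T F pref u ->
   (exists (Omega' : Type) (t' : form P -> Omega' -> Prop)
      (Sigma' : (Omega' -> Prop) -> Prop) (lam' : (Omega' -> Prop) -> R),
      subjective_model T F t' Sigma' lam' /\ sound T F t' /\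
      represents pref (fun phi => lam' (t' phi))).
Proof.
  intros [HT [HF [Hu [Heq Hr]]]].
  assert (TT : tS (Var T) = @setT Val).
  { apply functional_extensionality; intros [v [H1 H2]]. apply propositional_extensionality.
    unfold tS, setT; simpl. rewrite H1. tauto. }
  assert (TF : tS (Var F) = @set0 Val).
  { apply functional_extensionality; intros [v [H1 H2]]. apply propositional_extensionality.
    unfold tS, set0; simpl. rewrite H2. split; [discriminate|tauto]. }
  exists Val, tS, (fun _ => True), (lamS u).
  split; [|split].
  - split; [split; auto|split; [|intros; auto]].
    split; [split; [auto|split; auto]|]. split; [|split].
    + intros A _. unfold lamS. destruct excluded_middle_informative; [apply Hu|lra].
    + rewrite <- TF, lamS_tS; auto.
    + rewrite <- TT, lamS_tS; auto.
  - split; [|split; [|split]].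
    + intros phi psi [H1 H2]. apply functional_extensionality; intros [v [V1 V2]].
      apply propositional_extensionality. unfold tS; simpl. split; [apply H1|apply H2]; auto.
    + intros phi psi H [v [V1 V2]]. unfold tS; simpl. apply H; auto.
    + intros phi. apply functional_extensionality; intros w. apply propositional_extensionality.
      unfold tS; simpl. destruct (eval (proj1_sig w) phi); simpl; split; auto; try discriminate; tauto.
    + intros phi psi. apply functional_extensionality; intros w. apply propositional_extensionality.
      unfold tS; simpl. apply Bool.andb_true_iff.
  - replace (fun phi => lamS u (tS phi)) with u; auto.
    apply functional_extensionality; intros phi. symmetry. apply lamS_tS; auto.
Qed.

Lemma model2_good :
   (exists (Omega : Type) (t : form P -> Omega -> Prop)
      (Sigma : (Omega -> Prop) -> Prop) (lam : (Omega -> Prop) -> R),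
      subjective_model T F t Sigma lam /\ exact T F t /\ additive Sigma lam /\
      represents pref (fun phi => lam (t phi))) -> exists u, good T F pref u.
Proof.
  intros [Om [t [Sig [lam [[[HT HF] [[_ [Hr [H0 H1]]] HS]] [Hex [_ Hrep]]]]]]].
  exists (fun phi => lam (t phi)). split; [|split; [|split; [|split]]]; simpl.
  - rewrite HT; auto.
  - rewrite HF; auto.
  - intros phi; apply Hr, HS.
  - intros phi psi He; rewrite (Hex phi psi He); auto.
  - auto.
Qed.

Lemma model3_good :
   (exists (Omega' : Type) (t' : form P -> Omega' -> Prop)
      (Sigma' : (Omega' -> Prop) -> Prop) (lam' : (Omega' -> Prop) -> R),
      subjective_model T F t' Sigma' lam' /\ sound T F t' /\
      represents pref (fun phi => lam' (t' phi))) -> exists u, good T F pref u.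
Proof.
  intros [Om [t [Sig [lam [[[HT HF] [[_ [Hr [H0 H1]]] HS]] [[Hex _] Hrep]]]]]].
  exists (fun phi => lam (t phi)). split; [|split; [|split; [|split]]]; simpl.
  - rewrite HT; auto.
  - rewrite HF; auto.
  - intros phi; apply Hr, HS.
  - intros phi psi He; rewrite (Hex phi psi He); auto.
  - auto.
Qed.

End E.

Theorem proposition2 (P : Type) (T F : P) (hTF : T <> F)
  (pref : (form P -> R) -> (form P -> R) -> Prop) :
  ((non_triviality T F pref /\ objective_EU pref /\ equivalence_ax T F pref)
   <->
   (exists (Omega : Type) (t : form P -> Omega -> Prop)
      (Sigma : (Omega -> Prop) -> Prop) (lam : (Omega -> Prop) -> R),
      subjective_model T F t Sigma lam /\ exact T F t /\ additive Sigma lam /\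
      represents pref (fun phi => lam (t phi))))
  /\
  ((exists (Omega : Type) (t : form P -> Omega -> Prop)
      (Sigma : (Omega -> Prop) -> Prop) (lam : (Omega -> Prop) -> R),
      subjective_model T F t Sigma lam /\ exact T F t /\ additive Sigma lam /\
      represents pref (fun phi => lam (t phi)))
   <->
   (exists (Omega' : Type) (t' : form P -> Omega' -> Prop)
      (Sigma' : (Omega' -> Prop) -> Prop) (lam' : (Omega' -> Prop) -> R),
      subjective_model T F t' Sigma' lam' /\ sound T F t' /\
      represents pref (fun phi => lam' (t' phi)))).
Proof.
  split; split.
  - intros H. destruct (axioms_good T F pref H) as [u Hu]. apply (good_model2 T F pref u Hu).
  - intros H. destruct (model2_good T F pref H) as [u Hu]. apply (good_axioms T F pref u Hu).
  - intros H. destruct (model2_good T F pref H) as [u Hu]. apply (good_model3 T F pref u Hu).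
  - intros H. destruct (model3_good T F pref H) as [u Hu]. apply (good_model2 T F pref u Hu).
Qed.
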